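(* The calibrated hypergraph category $G_C\Omega$ equipped with the monadic multiplication $\smile$ given by $(H,\varrho)\smile(K,\varsigma)=(H\smile K,\varrho\smile\varsigma)$ and unit $(O,\varepsilon)$ is a graded $\Omega$ monad.
   Context: $\Omega$ is the category of finite ordinals $[l]=\{0,\dots,l-1\}$ and all functions, strict monoidal with $[l]\smile[m]=[l+m]$, $f\smile g(i)=f(i)$ for $i\in[l]$, $g(i-l)+p$ for $i\in[m]+l$, unit $[0]$. $G[l]$ is the set of hypergraphs on $[l]$ (sets of non empty subsets), $Gf(H)=\{f(X)\mid X\in H\}$, $H\smile K=H\cup(K+l)$, $O=\emptyset$. Fix finite additive commutative monoids $\mathsf{A}$, $\mathsf{M}$; $\mathsf{A}^X$ is the monoid of functions $X\to\mathsf{A}$, $f_\star(w)(s)=\sum_{f(r)=s}w(r)$, $f_*(\varpi)(v)=\sum_{f_\star(w)=v}\varpi(w)$. A calibration $\varrho\in C(H)$ assigns to each $X\in H$ a function $\varrho_X:\mathsf{A}^X\to\mathsf{M}$; $f_{H*}(\varrho)_Y=\sum_{X\in H,f(X)=Y}f|_{X*}(\varrho_X)$. The calibrated hypergraph category $G_C\Omega$ is the $\Omega$ category with objects $G_C[l]=\{(H,\varrho)\mid H\in G[l],\varrho\in C(H)\}$ and morphisms $G_Cf(H,\varrho)=(Gf(H),f_{H*}(\varrho))$. The calibration product is $(\varrho\smile\varsigma)_X=\varrho_X$ for $X\in H$, $\varsigma_{X-l}\circ t_{Xl\star}$ for $X\in K+l$ (with $t_{Xl}(r)=r-l$), and $\varepsilon=e_\emptyset$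 (empty function). A graded $\Omega$ monad is a concrete $\Omega$ category $D\Omega$ with maps $\smile:D[l]\times D[m]\to D([l]\smile[m])$ and $\iota\in D[0]$ that are associative, unital ($\lambda\smile\iota=\iota\smile\lambda=\lambda$) and satisfy $Df\smile Dg(\lambda\smile\mu)=Df(\lambda)\smile Dg(\mu)$. *)

(* Defs.v *)
From HB Require Import structures.
From mathcomp Require Import all_boot all_order all_algebra.
Set Implicit Arguments. Unset Strict Implicit. Unset Printing Implicit Defensive.
Import GRing.Theory.
Local Open Scope ring_scope.

Definition ocup l m p q (f : 'I_l -> 'I_p) (g : 'I_m -> 'I_q) : 'I_(l + m) -> 'I_(p + q) :=
  fun i => match split i with
           | inl a => lshift q (f a)
           | inr b => rshift p (g b)
           end.

(* ---------- Graded Omega monads ----------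
   D : a concrete Omega category, i.e. a functor Omega -> Set given by the
   carriers D l and the actions Dmap f; together with the product and unit.
   Since [l] \smile ([m] \smile [n]) = ([l] \smile [m]) \smile [n],
   [l] \smile [0] = [l] = [0] \smile [l] hold only propositionally in Rocq,
   the identifications are made via the canonical casts cast_ord. *)
Record is_graded_Omega_monad (D : nat -> Type)
  (Dmap : forall l p, ('I_l -> 'I_p) -> D l -> D p)
  (cup : forall l m, D l -> D m -> D (l + m)) (iota : D 0) : Prop := {
  gm_id : forall l (x : D l), Dmap l l id x = x;
  gm_comp : forall l p q (f : 'I_l -> 'I_p) (g : 'I_p -> 'I_q) (x : D l),
      Dmap l q (g \o f) x = Dmap p q g (Dmap l p f x);
  gm_assoc : forall l m n (x : D l) (y : D m) (z : D n),
      Dmap _ _ (cast_ord (esym (addnA l m n))) (cup _ _ (cup _ _ x y) z)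
      = cup _ _ x (cup _ _ y z);
  gm_unitr : forall l (x : D l), Dmap _ _ (cast_ord (addn0 l)) (cup _ _ x iota) = x;
  gm_unitl : forall l (x : D l), Dmap _ _ (cast_ord (add0n l)) (cup _ _ iota x) = x;
  gm_nat : forall l m p q (f : 'I_l -> 'I_p) (g : 'I_m -> 'I_q) (x : D l) (y : D m),
      Dmap _ _ (ocup f g) (cup _ _ x y) = cup _ _ (Dmap _ _ f x) (Dmap _ _ g y)
}.

Section Calibrated.
Variables (A M : finNmodType).

Definition Elt l (X : {set 'I_l}) := {x : 'I_l | x \in X}.

(* calibrations: rho_X : A^X -> M for every X; a calibration of H is
   represented by its extension by 0 outside H (see field cal_supp). *)
Definition calib l := forall X : {set 'I_l}, {ffun Elt X -> A} -> M.

Definition push l p (R : 'I_l -> 'I_p -> bool) (X : {set 'I_l}) (Y : {set 'I_p})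
  (w : {ffun Elt X -> A}) : {ffun Elt Y -> A} :=
  [ffun s : Elt Y => \sum_(r : Elt X | R (val r) (val s)) w r].

Definition pushC l p (f : 'I_l -> 'I_p) (X : {set 'I_l}) (Y : {set 'I_p})
  (varpi : {ffun Elt X -> A} -> M) : {ffun Elt Y -> A} -> M :=
  fun v => \sum_(w : {ffun Elt X -> A} | @push l p (fun r s => f r == s) X Y w == v) varpi w.

Definition Gmap l p (f : 'I_l -> 'I_p) (H : {set {set 'I_l}}) : {set {set 'I_p}} :=
  (fun X : {set 'I_l} => f @: X) @: H.

Definition calmap l p (f : 'I_l -> 'I_p) (H : {set {set 'I_l}}) (rho : calib l) : calib p :=
  fun Y v => \sum_(X in H | f @: X == Y) @pushC l p f X Y (rho X) v.

Definition Gcup l m (H : {set {set 'I_l}}) (K : {set {set 'I_m}}) : {set {set 'I_(l + m)}} :=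
  (fun X : {set 'I_l} => (@lshift l m) @: X) @: H :|: (fun X : {set 'I_m} => (@rshift l m) @: X) @: K.

(* (rho \smile sigma)_X = rho_X for X in H (X viewed inside [l+m]),
   sigma_{X-l} o t_{Xl star} for X in K + l, and (extension by) 0 otherwise *)
Definition calcup l m (H : {set {set 'I_l}}) (K : {set {set 'I_m}})
  (rho : calib l) (sig : calib m) : calib (l + m) :=
  fun X w =>
    match [pick X0 in H | (@lshift l m) @: X0 == X] with
    | Some X0 => rho X0 (@push (l + m) l (fun r s => r == @lshift l m s) X X0 w)
    | None =>
      match [pick X0 in K | (@rshift l m) @: X0 == X] with
      | Some X0 => sig X0 (@push (l + m) m (fun r s => r == @rshift l m s) X X0 w)
      | None => 0
      end
    end.

Unset Implicit Arguments.
Record GC l := MkGC {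
  hg : {set {set 'I_l}};
  cal : calib l;
  hg_ne : set0 \notin hg;
  cal_supp : forall X, X \notin hg -> forall w, cal X w = 0
}.
Set Implicit Arguments.
Arguments hg {l}. Arguments cal {l}. Arguments hg_ne {l}. Arguments cal_supp {l}.

Lemma Gmap_ne l p (f : 'I_l -> 'I_p) (H : {set {set 'I_l}}) : set0 \notin H -> set0 \notin Gmap f H.
Proof.
move=> H0; apply/imsetP => -[X XH] /esym/eqP; rewrite imset_eq0 => /eqP X0.
by move: H0; rewrite -X0 XH.
Qed.

Lemma calmap_supp l p (f : 'I_l -> 'I_p) (H : {set {set 'I_l}}) (rho : calib l) (Y : {set 'I_p}) :
  Y \notin Gmap f H -> forall v, @calmap l p f H rho Y v = 0.
Proof.
move=> nY v; rewrite /calmap big_pred0 // => X; apply/negP => /andP[XH /eqP eY].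
by move: nY; rewrite -eY imset_f.
Qed.

Lemma Gcup_ne l m (H : {set {set 'I_l}}) (K : {set {set 'I_m}}) :
  set0 \notin H -> set0 \notin K -> set0 \notin Gcup H K.
Proof.
move=> H0 K0; rewrite in_setU negb_or; apply/andP; split.
  apply/imsetP => -[X XH] /esym/eqP; rewrite imset_eq0 => /eqP X0.
  by move: H0; rewrite -X0 XH.
apply/imsetP => -[X XK] /esym/eqP; rewrite imset_eq0 => /eqP X0.
by move: K0; rewrite -X0 XK.
Qed.

Lemma calcup_supp l m (H : {set {set 'I_l}}) (K : {set {set 'I_m}}) (rho : calib l) (sig : calib m) (X : {set 'I_(l + m)}) :
  X \notin Gcup H K -> forall w, @calcup l m H K rho sig X w = 0.
Proof.
move=> nX w; rewrite /calcup.
case: pickP => [X0 /andP[X0H /eqP e]|_].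
  have : X \in Gcup H K by rewrite in_setU -e imset_f.
  by rewrite (negbTE nX).
case: pickP => [X0 /andP[X0K /eqP e]|_] //.
have : X \in Gcup H K by rewrite in_setU -e [X in _ || X]imset_f ?orbT.
by rewrite (negbTE nX).
Qed.

Definition GCmap l p (f : 'I_l -> 'I_p) (x : GC l) : GC p :=
  @MkGC p (Gmap f (hg x)) (calmap f (hg x) (cal x))
    (Gmap_ne f (hg_ne x)) (@calmap_supp l p f (hg x) (cal x)).

Definition GCcup l m (x : GC l) (y : GC m) : GC (l + m) :=
  @MkGC (l + m) (Gcup (hg x) (hg y)) (calcup (hg x) (hg y) (cal x) (cal y))
    (Gcup_ne (hg_ne x) (hg_ne y)) (@calcup_supp l m (hg x) (hg y) (cal x) (cal y)).

Definition GCunit : GC 0 :=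
  @MkGC 0 set0 (fun _ _ => 0) (negbT (in_set0 set0)) (fun _ _ _ => erefl).

End Calibrated.

(* Main.v *)
Require Import Defs.
From mathcomp Require Import all_boot all_order all_algebra.
From Stdlib Require Import FunctionalExtensionality ProofIrrelevance.
Set Implicit Arguments. Unset Strict Implicit. Unset Printing Implicit Defensive.
Import GRing.Theory.
Local Open Scope ring_scope.

Notation PUSH R X Y := (@push _ _ _ R X Y).
Notation PUSHC f X Y := (@pushC _ _ _ _ f X Y).
Notation CALMAP f H rho Y := (@calmap _ _ _ _ f H rho Y).

Notation HG x := (@hg _ _ _ x).
Notation CAL x := (@cal _ _ _ x).

Section S.
Variables (A M : finNmodType).

Lemma push_comp l p q (f : 'I_l -> 'I_p) (g : 'I_p -> 'I_q) (X : {set 'I_l}) (Y : {set 'I_p}) (Z : {set 'I_q})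
  (w : {ffun Elt X -> A}) :
  (forall r : 'I_l, r \in X -> f r \in Y) ->
  PUSH (fun r s => g r == s) Y Z (PUSH (fun r s => f r == s) X Y w)
  = PUSH (fun r s => (g \o f) r == s) X Z w.
Proof.
move=> fXY; apply/ffunP => t; rewrite !ffunE.
pose pr (r : Elt X) : Elt Y := exist _ (f (val r)) (fXY _ (valP r)).
rewrite (partition_big pr (fun s : Elt Y => g (val s) == val t)) //=.
apply: eq_bigr => s gs; rewrite ffunE; apply: eq_bigl => r /=.
apply/idP/andP => [/eqP e | [_ /eqP <-]] //.
split; first by rewrite e.
by apply/eqP/val_inj.
Qed.

Lemma pushC_comp l p q (f : 'I_l -> 'I_p) (g : 'I_p -> 'I_q) (X : {set 'I_l}) (Y : {set 'I_p}) (Z : {set 'I_q})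
  (phi : {ffun Elt X -> A} -> M) :
  (forall r : 'I_l, r \in X -> f r \in Y) ->
  PUSHC g Y Z (PUSHC f X Y phi) = PUSHC (g \o f) X Z phi.
Proof.
move=> fXY; apply: functional_extensionality => v; rewrite /pushC.
under [RHS]eq_bigl => w do rewrite -(@push_comp _ _ _ f g X Y Z w fXY).
rewrite (partition_big (PUSH (fun r s => f r == s) X Y)
  (fun u => PUSH (fun r s => g r == s) Y Z u == v)) //.
apply: eq_bigr => u /eqP pu; apply: eq_bigl => w.
by case: eqP => [->|]; rewrite ?pu ?eqxx ?andbF.
Qed.

Lemma pushC_idf l (f : 'I_l -> 'I_l) (X : {set 'I_l}) (phi : {ffun Elt X -> A} -> M) :
  (forall r, r \in X -> f r = r) -> PUSHC f X X phi = phi.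
Proof.
move=> fX; apply: functional_extensionality => v; rewrite /pushC.
have E w : PUSH (fun r s => f r == s) X X w = w.
  apply/ffunP => s; rewrite ffunE (big_pred1 s) // => r /=.
  rewrite fX ?(valP r) //; apply/eqP/eqP => [e|-> //]; exact: val_inj.
under eq_bigl => w do rewrite E.
by rewrite big_pred1_eq.
Qed.

Lemma pushC_bij l p (f : 'I_l -> 'I_p) (X : {set 'I_l}) (Y : {set 'I_p})
  (phi : {ffun Elt X -> A} -> M) v :
  injective f -> f @: X = Y ->
  PUSHC f X Y phi v = phi (PUSH (fun r s => r == f s) Y X v).
Proof.
move=> fi fXY.
have pull_push w : PUSH (fun r s => r == f s) Y X (PUSH (fun r s => f r == s) X Y w) = w.
  apply/ffunP => r; rewrite ffunE.
  have fr : f (val r) \in Y by rewrite -fXY imset_f // (valP r).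
  rewrite (big_pred1 (exist (fun x => x \in Y) _ fr : Elt Y)) /=; last first.
    by move=> s /=; apply/eqP/eqP => [e|-> //]; exact: val_inj.
  rewrite ffunE (big_pred1 r) // => r' /=.
  rewrite (inj_eq fi); apply/eqP/eqP => [e|-> //]; exact: val_inj.
have push_pull u : PUSH (fun r s => f r == s) X Y (PUSH (fun r s => r == f s) Y X u) = u.
  apply/ffunP => s.
  have : val s \in f @: X by rewrite fXY (valP s).
  case/imsetP => r0 r0X e.
  rewrite ffunE (big_pred1 (exist (fun x => x \in X) r0 r0X : Elt X)); last first.
    move=> r /=; rewrite e (inj_eq fi).
    by apply/eqP/eqP => [e'|-> //]; exact: val_inj.
  rewrite ffunE (big_pred1 s) // => s' /=.
  by rewrite -e; apply/eqP/eqP => [e'|-> //]; exact: val_inj.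
rewrite /pushC (big_pred1 (PUSH (fun r s => r == f s) Y X v)) // => w /=.
apply/eqP/eqP => [<-|->]; [by rewrite pull_push | by rewrite push_pull].
Qed.

Lemma imset_eqE (T U : finType) (f : T -> U) (B C : {set T}) :
  injective f -> (f @: B == f @: C) = (B == C).
Proof. by move=> fi; apply/eqP/eqP => [/(imset_inj fi)|->]. Qed.

Lemma calmap_inj l p (f : 'I_l -> 'I_p) (H : {set {set 'I_l}}) (rho : calib A M l) (X : {set 'I_l}) (Y : {set 'I_p}) :
  injective f -> f @: X = Y -> (forall X', X' \notin H -> forall w, rho X' w = 0) ->
  CALMAP f H rho Y = PUSHC f X Y (rho X).
Proof.
move=> fi fXY hs; apply: functional_extensionality => v; rewrite /calmap.
case XH: (X \in H).
  rewrite (big_pred1 X) // => X' /=; rewrite -fXY imset_eqE //.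
  by case: eqP => [->|]; rewrite ?XH ?andbF.
rewrite big_pred0; last first.
  by move=> X'; rewrite -fXY imset_eqE //; case: eqP => [->|]; rewrite ?XH ?andbF.
by rewrite /pushC big1 // => w _; apply: hs; rewrite XH.
Qed.

Lemma ls_rs l m (B : {set 'I_l}) (C : {set 'I_m}) :
  B != set0 -> (@lshift l m @: B == @rshift l m @: C) = false.
Proof.
case/set0Pn => i iB; apply/negbTE/eqP => e.
have : lshift m i \in @rshift l m @: C by rewrite -e imset_f.
case/imsetP => j _ /(congr1 val) /= E.
by have := ltn_ord i; rewrite E ltnNge leq_addr.
Qed.

Lemma ls_rs' l m (B : {set 'I_l}) (C : {set 'I_m}) :
  C != set0 -> (@lshift l m @: B == @rshift l m @: C) = false.
Proof.
case/set0Pn => j jC; apply/negbTE/eqP => e.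
have : rshift l j \in @lshift l m @: B by rewrite e imset_f.
case/imsetP => i _ /(congr1 val) /= E.
by have := ltn_ord i; rewrite -E ltnNge leq_addr.
Qed.

Lemma calcup_l l m (H : {set {set 'I_l}}) (K : {set {set 'I_m}}) rho sig (X0 : {set 'I_l}) (X : {set 'I_(l+m)}) :
  X0 \in H -> @lshift l m @: X0 = X ->
  @calcup A M l m H K rho sig X = PUSHC (@lshift l m) X0 X (rho X0).
Proof.
move=> X0H eX; apply: functional_extensionality => w; rewrite /calcup.
case: pickP => [X1 /andP[_ /eqP e] | /(_ X0)]; last by rewrite X0H eX eqxx.
rewrite -eX in e; have ? := imset_inj (@lshift_inj l m) e; subst X1.
by rewrite pushC_bij //; exact: lshift_inj.
Qed.

Lemma calcup_r l m (H : {set {set 'I_l}}) (K : {set {set 'I_m}}) rho sig (X1 : {set 'I_m}) (X : {set 'I_(l+m)}) :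
  set0 \notin H -> X1 \in K -> @rshift l m @: X1 = X ->
  @calcup A M l m H K rho sig X = PUSHC (@rshift l m) X1 X (sig X1).
Proof.
move=> H0 X1K eX; apply: functional_extensionality => w; rewrite /calcup.
case: pickP => [X0 /andP[X0H /eqP e] | _].
  have X0n : X0 != set0 by apply: contraNneq H0 => <-.
  have h := ls_rs X1 X0n; rewrite e -eX eqxx in h; discriminate.
case: pickP => [X2 /andP[_ /eqP e] | /(_ X1)]; last by rewrite X1K eX eqxx.
rewrite -eX in e; have ? := imset_inj (@rshift_inj l m) e; subst X2.
by rewrite pushC_bij //; exact: rshift_inj.
Qed.

Lemma GC_eq l (x y : GC A M l) : HG x = HG y ->
  (forall X, X \in HG y -> forall w, CAL x X w = CAL y X w) -> x = y.
Proof.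
case: x => H rho Hn rs; case: y => H' rho' Hn' rs' /= eH ecal; subst H'.
have erho : rho = rho'.
  apply: functional_extensionality_dep => X; apply: functional_extensionality => w.
  case XH: (X \in H); first by apply: ecal.
  by rewrite rs ?XH // rs' ?XH.
subst rho'.
have -> : Hn = Hn' by apply: bool_irrelevance.
by have -> : rs = rs' by apply: proof_irrelevance.
Qed.


Lemma pushC_ext l p (f f' : 'I_l -> 'I_p) (X : {set 'I_l}) (Y : {set 'I_p}) :
  f =1 f' -> @pushC A M _ _ f X Y = @pushC A M _ _ f' X Y.
Proof. by move/functional_extensionality ->. Qed.

Lemma pushC_sum (I : finType) (P : pred I) l p (g : 'I_l -> 'I_p) (Y : {set 'I_l}) (Z : {set 'I_p})
  (F : I -> {ffun Elt Y -> A} -> M) v :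
  PUSHC g Y Z (fun u => \sum_(i | P i) F i u) v = \sum_(i | P i) PUSHC g Y Z (F i) v.
Proof. by rewrite /pushC exchange_big. Qed.

Lemma law_id l (x : GC A M l) : GCmap id x = x.
Proof.
apply: GC_eq => [|X XH w] /=.
  rewrite /Gmap (eq_imset _ (fun X => imset_id X)); exact: imset_id.
rewrite (@calmap_inj _ _ _ _ _ X) ?imset_id //; last exact: cal_supp.
by rewrite pushC_idf.
Qed.

Lemma law_comp l p q (f : 'I_l -> 'I_p) (g : 'I_p -> 'I_q) (x : GC A M l) :
  GCmap (g \o f) x = GCmap g (GCmap f x).
Proof.
apply: GC_eq => [|Z _ w] /=.
  rewrite /Gmap -imset_comp; apply: eq_imset => X /=; exact: imset_comp.
rewrite /calmap.
under [RHS]eq_bigr => Y _ do rewrite pushC_sum.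
rewrite (partition_big (fun X : {set 'I_l} => f @: X)
  (fun Y => (Y \in Gmap f (HG x)) && (g @: Y == Z))) /=; last first.
  move=> X /andP[XH e]; rewrite -imset_comp e andbT.
  by apply/imsetP; exists X.
apply: eq_bigr => Y /andP[_ gY].
rewrite (eq_bigl (fun X => (X \in HG x) && (f @: X == Y))); last first.
  move=> X /=; case fX: (f @: X == Y); rewrite ?andbF ?andbT //.
  by rewrite imset_comp (eqP fX) gY andbT.
apply: eq_bigr => X /andP[XH /eqP fX].
by rewrite pushC_comp // => r rX; rewrite -fX imset_f.
Qed.


Lemma law_unitr l (x : GC A M l) :
  GCmap (cast_ord (addn0 l)) (GCcup x (GCunit A M)) = x.
Proof.
have eX (X : {set 'I_l}) :
    [set cast_ord (addn0 l) x | x in [set @lshift l 0 x | x in X]] = X.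
  by rewrite -imset_comp -[RHS]imset_id; apply: eq_imset => i; exact: val_inj.
apply: GC_eq => [|X XH w] /=.
  rewrite /Gmap /Gcup imset0 setU0 -imset_comp -[RHS]imset_id.
  by apply: eq_imset => X /=; rewrite eX.
rewrite (@calmap_inj _ _ _ _ _ (@lshift l 0 @: X)) //; last 2 first.
- exact: cast_ord_inj.
- exact: calcup_supp.
rewrite (@calcup_l _ _ _ _ _ _ X) // pushC_comp ?pushC_idf //.
- by move=> r _; apply: val_inj.
- by move=> r rX; apply: imset_f.
Qed.

Lemma law_unitl l (x : GC A M l) :
  GCmap (cast_ord (add0n l)) (GCcup (GCunit A M) x) = x.
Proof.
have eX (X : {set 'I_l}) :
    [set cast_ord (add0n l) x | x in [set @rshift 0 l x | x in X]] = X.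
  by rewrite -imset_comp -[RHS]imset_id; apply: eq_imset => i; exact: val_inj.
apply: GC_eq => [|X XH w] /=.
  rewrite /Gmap /Gcup imset0 set0U -imset_comp -[RHS]imset_id.
  by apply: eq_imset => X /=; rewrite eX.
rewrite (@calmap_inj _ _ _ _ _ (@rshift 0 l @: X)) //; last 2 first.
- exact: cast_ord_inj.
- exact: calcup_supp.
rewrite (@calcup_r _ _ _ _ _ _ X) ?in_set0 // pushC_comp ?pushC_idf //.
- by move=> r _; apply: val_inj.
- by move=> r rX; apply: imset_f.
Qed.


Lemma pushC_ext_app l p (f f' : 'I_l -> 'I_p) (X : {set 'I_l}) (Y : {set 'I_p})
  (phi : {ffun Elt X -> A} -> M) v :
  f =1 f' -> PUSHC f X Y phi v = PUSHC f' X Y phi v.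
Proof. by move/functional_extensionality ->. Qed.

Lemma law_assoc l m n (x : GC A M l) (y : GC A M m) (z : GC A M n) :
  GCmap (cast_ord (esym (addnA l m n))) (GCcup (GCcup x y) z) = GCcup x (GCcup y z).
Proof.
set c := cast_ord (esym (addnA l m n)).
have s1 (X : {set 'I_l}) :
    c @: (@lshift (l + m) n @: (@lshift l m @: X)) = @lshift l (m + n) @: X.
  by rewrite -!imset_comp; apply: eq_imset => i; apply: val_inj.
have s2 (X : {set 'I_m}) :
    c @: (@lshift (l + m) n @: (@rshift l m @: X)) = @rshift l (m + n) @: (@lshift m n @: X).
  by rewrite -!imset_comp; apply: eq_imset => i; apply: val_inj.
have s3 (X : {set 'I_n}) :
    c @: (@rshift (l + m) n @: X) = @rshift l (m + n) @: (@rshift m n @: X).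
  by rewrite -!imset_comp; apply: eq_imset => i; apply: val_inj; rewrite /= addnA.
have Hn := hg_ne _ _ _ x; have Kn := hg_ne _ _ _ y.
apply: GC_eq => [|Z] /=.
  rewrite /Gmap /Gcup !imsetU -!imset_comp setUA.
  congr (_ :|: _ :|: _); apply: eq_imset => X /=; by rewrite ?s1 ?s2 ?s3.
rewrite /Gcup in_setU => /orP[/imsetP[X0 X0H ->]|/imsetP[Y YKL ->]].
  move=> w.
  rewrite (@calmap_inj _ _ _ _ _ (@lshift (l + m) n @: (@lshift l m @: X0))); last 3 first.
  - exact: cast_ord_inj.
  - exact: s1.
  - exact: calcup_supp.
  rewrite (@calcup_l _ _ _ _ _ _ (@lshift l m @: X0)) //; last first.
    by apply/setUP; left; apply/imsetP; exists X0.
  rewrite (@calcup_l _ _ _ _ _ _ X0) // (@calcup_l _ _ _ _ _ _ X0) //.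
  rewrite !pushC_comp; try by move=> r rX; apply: imset_f.
  by apply: pushC_ext_app => i; apply: val_inj.
move: YKL; rewrite in_setU => /orP[/imsetP[X1 X1K ->]|/imsetP[X2 X2L ->]] w.
  rewrite (@calmap_inj _ _ _ _ _ (@lshift (l + m) n @: (@rshift l m @: X1))); last 3 first.
  - exact: cast_ord_inj.
  - exact: s2.
  - exact: calcup_supp.
  rewrite (@calcup_l _ _ _ _ _ _ (@rshift l m @: X1)) //; last first.
    by apply/setUP; right; apply/imsetP; exists X1.
  rewrite (@calcup_r _ _ _ _ _ _ X1) // (@calcup_r _ _ _ _ _ _ (@lshift m n @: X1)) //;
    last by apply/setUP; left; apply/imsetP; exists X1.
  rewrite (@calcup_l _ _ _ _ _ _ X1) //.
  rewrite !pushC_comp; try by move=> r rX; apply: imset_f.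
  by apply: pushC_ext_app => i; apply: val_inj.
rewrite (@calmap_inj _ _ _ _ _ (@rshift (l + m) n @: X2)); last 3 first.
- exact: cast_ord_inj.
- exact: s3.
- exact: calcup_supp.
rewrite (@calcup_r _ _ _ _ _ _ X2) //; last exact: Gcup_ne.
rewrite (@calcup_r _ _ _ _ _ _ (@rshift m n @: X2)) //;
  last by apply/setUP; right; apply/imsetP; exists X2.
rewrite (@calcup_r _ _ _ _ _ _ X2) //.
rewrite !pushC_comp; try by move=> r rX; apply: imset_f.
by apply: pushC_ext_app => i; apply: val_inj; rewrite /= addnA.
Qed.


Lemma law_nat l m p q (f : 'I_l -> 'I_p) (g : 'I_m -> 'I_q) (x : GC A M l) (y : GC A M m) :
  GCmap (ocup f g) (GCcup x y) = GCcup (GCmap f x) (GCmap g y).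
Proof.
have ocup_l i : ocup f g (@lshift l m i) = @lshift p q (f i).
  by rewrite /ocup -[@lshift l m i]/(unsplit (inl i)) unsplitK.
have ocup_r j : ocup f g (@rshift l m j) = @rshift p q (g j).
  by rewrite /ocup -[@rshift l m j]/(unsplit (inr j)) unsplitK.
have so1 (X : {set 'I_l}) : ocup f g @: (@lshift l m @: X) = @lshift p q @: (f @: X).
  by rewrite -!imset_comp; apply: eq_imset => i /=; exact: ocup_l.
have so2 (X : {set 'I_m}) : ocup f g @: (@rshift l m @: X) = @rshift p q @: (g @: X).
  by rewrite -!imset_comp; apply: eq_imset => i /=; exact: ocup_r.
have Hn := hg_ne _ _ _ x; have Kn := hg_ne _ _ _ y.
apply: GC_eq => [|Z] /=.
  rewrite /Gmap /Gcup imsetU -!imset_comp.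
  by congr (_ :|: _); apply: eq_imset => X /=; rewrite ?so1 ?so2.
rewrite /Gcup in_setU => /orP[/imsetP[Y YH ->]|/imsetP[Y YK ->]] w.
  rewrite [in RHS](@calcup_l _ _ _ _ _ _ Y) //.
  rewrite /calmap pushC_sum.
  rewrite (eq_bigl (fun X : {set 'I_(l+m)} => (X \in (fun X0 : {set 'I_l} => @lshift l m @: X0) @: HG x)
                         && (ocup f g @: X == @lshift p q @: Y))); last first.
    move=> X /=; rewrite in_setU andb_orl [X in _ || X](_ : _ = false) ?orbF //.
    apply/negbTE/andP => -[/imsetP[X1 X1K ->]].
    rewrite so2 eq_sym ls_rs' // imset_eq0.
    by apply: contraNneq Kn => <-.
  rewrite big_mkcondr big_imset /=; last first.
    by move=> ? ? _ _; apply: imset_inj; apply: lshift_inj.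
  rewrite [RHS]big_mkcondr; apply: eq_bigr => X0 X0H.
  rewrite so1 imset_eqE; last exact: lshift_inj.
  case: eqP => // fX0.
  rewrite (@calcup_l _ _ _ _ _ _ X0) // !pushC_comp;
    try (by move=> r rX; apply: imset_f); try (by move=> r rX; rewrite -fX0 imset_f).
  by apply: pushC_ext_app => i; exact: ocup_l.
rewrite [in RHS](@calcup_r _ _ _ _ _ _ Y) //; last exact: Gmap_ne.
rewrite /calmap pushC_sum.
rewrite (eq_bigl (fun X : {set 'I_(l+m)} => (X \in (fun X0 : {set 'I_m} => @rshift l m @: X0) @: HG y)
                       && (ocup f g @: X == @rshift p q @: Y))); last first.
  move=> X /=; rewrite in_setU andb_orl [X in X || _](_ : _ = false) //.
  apply/negbTE/andP => -[/imsetP[X1 X1H ->]].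
  rewrite so1 ls_rs // imset_eq0.
  by apply: contraNneq Hn => <-.
rewrite big_mkcondr big_imset /=; last first.
  by move=> ? ? _ _; apply: imset_inj; apply: rshift_inj.
rewrite [RHS]big_mkcondr; apply: eq_bigr => X1 X1K.
rewrite so2 imset_eqE; last exact: rshift_inj.
case: eqP => // gX1.
rewrite (@calcup_r _ _ _ _ _ _ X1) // !pushC_comp;
  try (by move=> r rX; apply: imset_f); try (by move=> r rX; rewrite -gX1 imset_f).
by apply: pushC_ext_app => i; exact: ocup_r.
Qed.

End S.

Theorem proposition3p26 (A M : finNmodType) :
  @is_graded_Omega_monad (@GC A M) (@GCmap A M) (@GCcup A M) (@GCunit A M).
Proof.
split.
- move=> l x; exact: law_id.
- move=> l p q f g x; exact: law_comp.
- move=> l m n x y z; exact: law_assoc.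
- move=> l x; exact: law_unitr.
- move=> l x; exact: law_unitl.
- move=> l m p q f g x y; exact: law_nat.
Qed.
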